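(* Let $F$ be a field, $V$ a nonzero vector space over $F$, $\Gamma$ a nonempty set, $\varphi:\Gamma\to\Gamma$ a map and $\mathfrak{w}\in F^\Gamma$, and let $\sigma_{\varphi,\mathfrak{w}}:V^\Gamma\to V^\Gamma$, $(x_\alpha)_{\alpha\in\Gamma}\mapsto(\mathfrak{w}_\alpha x_{\varphi(\alpha)})_{\alpha\in\Gamma}$. If $\downarrow\mathfrak{Z}=\Gamma$, then ${\rm Eigen}(\sigma_{\varphi,\mathfrak{w}},V^\Gamma)\subseteq\{0\}$; moreover in this case ${\rm Eigen}(\sigma_{\varphi,\mathfrak{w}},V^\Gamma)=\varnothing$ if $\varphi(\Gamma\setminus\mathfrak{Z})=\Gamma$, and ${\rm Eigen}(\sigma_{\varphi,\mathfrak{w}},V^\Gamma)=\{0\}$ otherwise.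
   Context: For a linear map $T:W\to W$ on an $F$-vector space $W$, ${\rm Eigen}(T,W)$ is the set of all $r\in F$ such that $T(x)=rx$ for some nonzero $x\in W$. $\mathfrak{Z}:=\{\alpha\in\Gamma:\mathfrak{w}_\alpha=0\}$ and $\downarrow\mathfrak{Z}:=\bigcup_{n\geq0}\varphi^{-n}(\mathfrak{Z})$. *)

(* Defs.v *)
From mathcomp Require Import all_boot all_order all_algebra.
Set Implicit Arguments. Unset Strict Implicit. Unset Printing Implicit Defensive.
Import GRing.Theory.
Local Open Scope ring_scope.

Definition wshift (F : fieldType) (V : lmodType F) (Gamma : Type)
  (phi : Gamma -> Gamma) (w : Gamma -> F) (x : Gamma -> V) : Gamma -> V :=
  fun a => w a *: x (phi a).

Definition Eigen (F : fieldType) (V : lmodType F) (Gamma : Type)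
  (T : (Gamma -> V) -> (Gamma -> V)) : F -> Prop :=
  fun r => exists x : Gamma -> V, x <> (fun _ => 0) /\ T x = (fun a => r *: x a).

Definition Zset (F : fieldType) (Gamma : Type) (w : Gamma -> F) : Gamma -> Prop :=
  fun a => w a = 0.

Definition downZ (F : fieldType) (Gamma : Type) (phi : Gamma -> Gamma)
  (w : Gamma -> F) : Gamma -> Prop :=
  fun a => exists n : nat, Zset w (iter n phi a).

(* Main.v *)
Require Import Defs.
From mathcomp Require Import all_boot all_order all_algebra.
From Stdlib Require Import Classical ClassicalEpsilon FunctionalExtensionality.
Import GRing.Theory.
Local Open Scope ring_scope.

Lemma part1 (F : fieldType) (V : lmodType F) (Gamma : Type)
  (phi : Gamma -> Gamma) (w : Gamma -> F) :
  (forall a : Gamma, downZ phi w a) ->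
  (forall r : F, Eigen (wshift (V:=V) phi w) r -> r = 0).
Proof.
move=> hd r [x [hx0 hx]].
apply/eqP; apply/negP => /negP hr; apply: hx0.
have key : forall n a, w (iter n phi a) = 0 -> x a = 0.
  elim=> [|n IH] a /=.
  - move=> h0; have := congr1 (fun f => f a) hx; rewrite /wshift /= h0 scale0r.
    by move/esym/eqP; rewrite scaler_eq0 (negbTE hr) /= => /eqP.
  - rewrite -iterS iterSr => /IH /= h.
    have := congr1 (fun f => f a) hx; rewrite /wshift /= h scaler0.
    by move/esym/eqP; rewrite scaler_eq0 (negbTE hr) /= => /eqP.
apply: functional_extensionality => a.
by have [n hn] := hd a; exact: key hn.
Qed.

Theorem lemma2p2 (F : fieldType) (V : lmodType F) (Gamma : Type)
  (phi : Gamma -> Gamma) (w : Gamma -> F)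
  (hV : exists v : V, v != 0) (hGamma : inhabited Gamma) :
  (forall a : Gamma, downZ phi w a) ->
  (forall r : F, Eigen (wshift (V:=V) phi w) r -> r = 0) /\
  ((forall b : Gamma, exists a : Gamma, ~ Zset w a /\ phi a = b) ->
     forall r : F, ~ Eigen (wshift (V:=V) phi w) r) /\
  (~ (forall b : Gamma, exists a : Gamma, ~ Zset w a /\ phi a = b) ->
     forall r : F, Eigen (wshift (V:=V) phi w) r <-> r = 0).
Proof.
move=> hd; have P1 := @part1 F V Gamma phi w hd.
split; first exact: P1.
split.
- move=> hs r he; have r0 := P1 r he.
  move: he => [x [hx0 hx]]; apply: hx0.
  apply: functional_extensionality => b.
  have [a [ha hab]] := hs b.
  have := congr1 (fun f => f a) hx; rewrite /wshift /= r0 scale0r hab.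
  move/eqP; rewrite scaler_eq0 => /orP [/eqP h|/eqP //].
  by case: ha.
- move=> hns r; split; first exact: P1.
  move=> ->.
  have [b hb] := not_all_ex_not _ _ hns.
  have hb' : forall a, phi a = b -> w a = 0.
    move=> a hab; apply: NNPP => hw; apply: hb; by exists a.
  have [v hv] := hV.
  exists (fun c => if excluded_middle_informative (c = b) then v else 0).
  split.
  + move=> hx; have /= := congr1 (fun f => f b) hx.
    case: excluded_middle_informative => [h hv0|]; last by [].
    move: hv0 => /= hv0.
    by move: hv; rewrite hv0 eqxx.
  + apply: functional_extensionality => a; rewrite /wshift scale0r.
    case: excluded_middle_informative => [h|h]; last by rewrite scaler0.
    by rewrite (hb' a h) scale0r.
Qed.
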